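(* Let $(q_n)_{n\ge1}$ be the Fibonacci Quilt sequence. Then (i) $q_{n+1}=q_n+q_{n-4}$ for all $n\ge6$; (ii) $q_{n+1}=q_{n-1}+q_{n-2}$ for all $n\ge5$; (iii) $\sum_{i=1}^n q_i = q_{n+5}-6$ for all $n\ge1$.
   Context: Given an increasing sequence of positive integers $(q_i)_{i\ge1}$, an FQ-legal decomposition of an integer $m\ge0$ is an expression $m=q_{\ell_1}+q_{\ell_2}+\cdots+q_{\ell_t}$ ($t\ge0$, the empty sum representing $0$) with distinct indices $\ell_1>\ell_2>\cdots>\ell_t$ such that $|\ell_i-\ell_j|\notin\{1,3,4\}$ for all $i,j$, and $\{1,3\}\not\subset\{\ell_1,\dots,\ell_t\}$. The Fibonacci Quilt sequence is the increasing sequence of positive integers $(q_i)_{i\ge1}$ in which each $q_i$ is the smallest positive integer having no FQ-legal decomposition using only $q_1,\dots,q_{i-1}$. Its first terms are $1,2,3,4,5,7,9,12,16,21,28,37,49,\dots$. *)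

(* Defs.v *)
From mathcomp Require Import all_boot.
Set Implicit Arguments. Unset Strict Implicit. Unset Printing Implicit Defensive.

Definition natdist (i j : nat) : nat := (i - j) + (j - i).

(* A set of indices {l_1 > ... > l_t} is represented by a duplicate-free list
   L of (positive) indices.  FQ-legality: |l_i - l_j| not in {1,3,4} and
   {1,3} is not a subset of the index set. *)
Definition FQ_legal (L : seq nat) : bool :=
  [&& uniq L,
      all (fun i => all (fun j => natdist i j \notin [:: 1; 3; 4]) L) L &
      ~~ ((1 \in L) && (3 \in L))].

Fixpoint subseqs (T : Type) (s : seq T) : seq (seq T) :=
  if s is x :: s' then
    let r := subseqs s' in [seq x :: t | t <- r] ++ r
  else [:: [::]].

Definition FQ_repr (s : seq nat) (m : nat) : bool :=
  has (fun L => FQ_legal L && (sumn [seq nth 0 s l.-1 | l <- L] == m))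
      (subseqs (iota 1 (size s))).

(* The smallest positive integer with no FQ-legal decomposition using the
   terms of s.  (sumn s).+1 is never representable, so the search over
   1..(sumn s).+1 always succeeds; the default 0 is never used.) *)
Definition FQ_next (s : seq nat) : nat :=
  head 0 [seq m <- iota 1 (sumn s).+1 | ~~ FQ_repr s m].

Fixpoint FQ_terms (k : nat) : seq nat :=
  if k is k'.+1 then let s := FQ_terms k' in rcons s (FQ_next s) else [::].

(* The Fibonacci Quilt sequence, indexed from 1 (q 0 is a junk value 0). *)
Definition q (n : nat) : nat := nth 0 (FQ_terms n) n.-1.

(* Main.v *)
Require Import Defs.
From mathcomp Require Import all_boot.
From mathcomp Require Import zify.

Fixpoint f (n : nat) : nat :=
  match n with
  | 0 => 0 | 1 => 1 | 2 => 2 | 3 => 3 | 4 => 4 | 5 => 5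
  | S (S ((S k) as k1)) => f k1 + f k
  end.

Lemma fii n : 6 <= n -> f n = f (n - 2) + f (n - 3).
Proof. by case: n => [|[|[|[|[|[|n]]]]]] //= _; rewrite !subn0. Qed.

Lemma fi n : 6 <= n -> f n.+1 = f n + f (n - 4).
Proof.
move=> Hn; case: (ltnP n 7) => Hn7.
  by have -> : n = 6 by lia.
have h1 := fii n.+1 ltac:(lia). have h2 := fii n ltac:(lia).
have h3 := fii (n - 1) ltac:(lia).
have e1 : n.+1 - 2 = n - 1 by lia. have e2 : n.+1 - 3 = n - 2 by lia.
have e3 : n - 1 - 2 = n - 3 by lia. have e4 : n - 1 - 3 = n - 4 by lia.
rewrite e1 e2 in h1; rewrite e3 e4 in h3.
lia.
Qed.

Lemma f_pos n : 0 < n -> 0 < f n.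
Proof.
elim/ltn_ind: n => n IH Hn.
case: (ltnP n 6) => Hn6.
  by case: n Hn Hn6 {IH} => [|[|[|[|[|[|n]]]]]].
rewrite fii //; have := IH (n - 2); lia.
Qed.

Lemma f_lt n : f n < f n.+1.
Proof.
case: (ltnP n 6) => Hn6; first by case: n Hn6 => [|[|[|[|[|[|n]]]]]].
rewrite fi //; have := f_pos (n - 4); lia.
Qed.

Lemma f_ltn m n : m < n -> f m < f n.
Proof.
elim: n => // n IH; rewrite ltnS leq_eqVlt => /orP [/eqP -> | H].
  exact: f_lt.
by apply: ltn_trans (IH H) (f_lt n).
Qed.

Lemma f_leq m n : m <= n -> f m <= f n.
Proof. by rewrite leq_eqVlt => /orP [/eqP -> // | H]; apply/ltnW/f_ltn. Qed.

Lemma f_dbl n : f n.+2 <= 2 * f n.+1.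
Proof.
case: (ltnP n 5) => Hn6; first by case: n Hn6 => [|[|[|[|[|n]]]]].
rewrite (fi n.+1) //; have := f_leq (n.+1-4) n.+1; lia.
Qed.
Set Implicit Arguments. Unset Strict Implicit.

Definition bad (x y : nat) : Prop :=
  natdist x y = 1 \/ natdist x y = 3 \/ natdist x y = 4.

Definition LP (t : seq nat) : Prop :=
  [/\ uniq t, (forall x y, x \in t -> y \in t -> ~ bad x y) & ~ (1 \in t /\ 3 \in t)].

Definition S (t : seq nat) : nat := sumn (map f t).

Lemma legalP t : FQ_legal t <-> LP t.
Proof.
rewrite /FQ_legal /LP /bad; split.
  case/and3P=> U /allP A N; split => //.
    move=> x y xt yt; have /allP := A x xt; move=> /(_ y yt).
    by move=> K [E|[E|E]]; move: K; rewrite E.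
  by case=> a b; move: N; rewrite a b.
case=> U A N; apply/and3P; split => //.
  apply/allP => x xt; apply/allP => y yt; have := A x y xt yt.
  move=> K; rewrite !inE; apply/negP => /or3P [] /eqP E; apply: K; rewrite E; tauto.
by apply/negP => /andP [] a b; apply: N.
Qed.

Lemma LP_sub t u : LP t -> uniq u -> {subset u <= t} -> LP u.
Proof.
case=> U A N Uu sub; split => //.
  by move=> x y /sub xt /sub yt; apply: A.
by case=> /sub ? /sub ?; apply: N.
Qed.

Lemma LP_perm t u : perm_eq t u -> LP t -> LP u.
Proof.
move=> P H; apply: (LP_sub H); first by rewrite -(perm_uniq P); case: H.
by move=> x; rewrite (perm_mem P).
Qed.

Lemma S_perm t u : perm_eq t u -> S t = S u.
Proof. by move=> P; apply/perm_sumn/perm_map. Qed.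

Lemma rem_split t x : LP t -> x \in t ->
  [/\ LP (rem x t), S t = f x + S (rem x t) &
      forall y, (y \in rem x t) = (y != x) && (y \in t)].
Proof.
move=> H xt; have U : uniq t by case: H.
have M : forall y, (y \in rem x t) = (y != x) && (y \in t).
  by move=> y; rewrite (mem_rem_uniq x U) inE.
split => //.
  apply: (LP_sub H); first exact: rem_uniq.
  by move=> y; rewrite M => /andP [].
by rewrite (S_perm (perm_to_rem xt)).
Qed.

Lemma S_ge t x : LP t -> x \in t -> f x <= S t.
Proof. by move=> H xt; case: (rem_split H xt) => _ -> _; apply: leq_addr. Qed.

Lemma subseqs_mem (s t : seq nat) : subseq t s -> t \in subseqs s.
Proof.
elim: s t => [|x s IH] [|y t] //=.
- by move=> _; rewrite mem_cat; apply/orP; right; apply: IH; apply: sub0seq.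
- case: eqP => [-> | _] H; rewrite mem_cat; apply/orP.
    by left; apply: map_f; apply: IH.
  by right; apply: IH.
Qed.

Lemma mem_subseqs (s t : seq nat) : t \in subseqs s -> subseq t s.
Proof.
elim: s t => [|x s IH] t /=; first by rewrite inE => /eqP ->.
rewrite mem_cat => /orP [/mapP [u /IH su ->] | /IH st].
  by rewrite /= eqxx.
by apply: subseq_trans st (subseq_cons s x).
Qed.

Definition inr j (t : seq nat) := forall x, x \in t -> 0 < x <= j.

Lemma to_sub j t : LP t -> inr j t ->
  exists2 u, u \in subseqs (iota 1 j) & FQ_legal u /\ S u = S t.
Proof.
move=> H R; set u := [seq x <- iota 1 j | x \in t].
have P : perm_eq t u.
  apply: uniq_perm; first by case: H.
    by rewrite filter_uniq // iota_uniq.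
  move=> x; rewrite mem_filter mem_iota; case xt: (x \in t) => //=.
  by have := R x xt; lia.
exists u; first by apply: subseqs_mem; apply: filter_subseq.
by split; [apply/legalP; apply: LP_perm P H | apply/esym/S_perm].
Qed.

Lemma of_sub j u : u \in subseqs (iota 1 j) -> FQ_legal u -> LP u /\ inr j u.
Proof.
move=> /mem_subseqs /mem_subseq sub /legalP H; split => // x /sub.
rewrite mem_iota; lia.
Qed.

Lemma fi' n m : 6 <= n -> m = n - 4 -> f n.+1 = f n + f m.
Proof. by move=> h ->; apply: fi. Qed.

Lemma f3 j : 7 <= j -> f j.+3 = f j + f (j-4) + f (j-3) + f (j-2).
Proof.
move=> h; rewrite (@fi' j.+2 (j-2)) ?(@fi' j.+1 (j-3)) ?(@fi' j (j-4)); lia.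
Qed.

Lemma LP_nb t x y : LP t -> x \in t -> y \in t ->
  ~ ((x - y) + (y - x) = 1 \/ (x - y) + (y - x) = 3 \/ (x - y) + (y - x) = 4).
Proof. by case=> _ A _ xt yt; apply: A. Qed.

Lemma base_bound j :
  all (fun u => FQ_legal u ==> (S u < f j.+3)) (subseqs (iota 1 j)) ->
  forall t, LP t -> inr j t -> S t < f j.+3.
Proof.
move=> /allP A t H R; case: (to_sub H R) => u us [L <-].
by have := A u us; rewrite L.
Qed.

Lemma bound j t : LP t -> inr j t -> S t < f j.+3.
Proof.
elim/ltn_ind: j t => j IH t H R.
case: (ltnP j 7) => Hj.
  case: j Hj {IH} t H R => [|[|[|[|[|[|[|j]]]]]]] // _;
  apply: base_bound; vm_compute; reflexivity.
have E := f3 Hj.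
case jt: (j \in t); last first.
  have R' : inr j.-1 t.
    move=> x xt; have := R x xt; case: (x =P j) => [e | ne]; first by move: xt; rewrite e jt.
    lia.
  have := IH j.-1 ltac:(lia) t H R'.
  have := f_leq j.-1.+3 j.+3 ltac:(lia). lia.
case: (rem_split H jt) => H1 -> M1.
case: (boolP ((j - 2) \in rem j t)) => j2.
  case: (rem_split H1 j2) => H2 -> M2.
  have R2 : inr (j - 7) (rem (j-2) (rem j t)).
    move=> x; rewrite M2 M1 => /and3P [/eqP n1 /eqP n2 xt].
    have := R x xt; have := LP_nb H jt xt.
    have xt1 : x \in rem j t by rewrite M1; apply/andP; split => //; apply/eqP; lia.
    have := LP_nb H1 j2 xt1. lia.
  have := IH (j - 7) ltac:(lia) _ H2 R2.
  have -> : (j - 7).+3 = j - 4 by lia.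
  lia.
have R1 : inr (j - 5) (rem j t).
  move=> x; rewrite M1 => /andP [/eqP n1 xt].
  have := R x xt; have := LP_nb H jt xt.
  have : x <> j - 2.
    by move=> e; move: j2; rewrite M1 -e xt andbT; apply/negP/negPn/eqP.
  lia.
have := IH (j - 5) ltac:(lia) _ H1 R1.
have -> : (j - 5).+3 = j - 2 by lia.
lia.
Qed.

Lemma base_nonrep k :
  all (fun u => FQ_legal u ==> (S u != f k.+1)) (subseqs (iota 1 k)) ->
  forall t, LP t -> inr k t -> S t <> f k.+1.
Proof.
move=> /allP A t H R; case: (to_sub H R) => u us [L <-].
by have := A u us; rewrite L /= => /eqP.
Qed.

Lemma nonrep k t : LP t -> inr k t -> S t <> f k.+1.
Proof.
elim/ltn_ind: k t => k IH t H R.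
case: (ltnP k 9) => Hk.
  case: k Hk {IH} t H R => [|[|[|[|[|[|[|[|[|k]]]]]]]]] // _;
  apply: base_nonrep; vm_compute; reflexivity.
have E1 := @fi' k (k-4) ltac:(lia) ltac:(lia).
have E2 : f k.+1 = f (k-1) + f (k-2).
  by rewrite fii //; lia.
have E3 : f (k-2) = f (k-3) + f (k-7).
  have -> : k - 2 = (k-3).+1 by lia.
  by apply: fi'; lia.
have F1 := f_ltn (k-4) (k-2) ltac:(lia).
have F2 := f_ltn (k-3) (k-2) ltac:(lia).
case kt: (k \in t).
  case: (rem_split H kt) => H1 S1 M1.
  case: (boolP ((k - 2) \in rem k t)) => k2.
    have := S_ge H1 k2; lia.
  have R1 : inr (k - 5) (rem k t).
    move=> x; rewrite M1 => /andP [/eqP n1 xt].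
    have := R x xt; have := LP_nb H kt xt.
    have : x <> k - 2.
      by move=> e; move: k2; rewrite M1 -e xt andbT; apply/negP/negPn/eqP.
    lia.
  have := IH (k - 5) ltac:(lia) _ H1 R1.
  have -> : (k - 5).+1 = k - 4 by lia.
  lia.
case: (boolP ((k - 1) \in t)) => k1; last first.
  have R0 : inr (k - 2) t.
    move=> x xt; have := R x xt.
    have : x <> k by move=> e; move: xt; rewrite e kt.
    have : x <> k - 1 by move=> e; move: k1; rewrite -e xt.
    lia.
  have := bound H R0; have -> : (k - 2).+3 = k.+1 by lia.
  lia.
case: (rem_split H k1) => H1 S1 M1.
have R1' : forall x, x \in rem (k-1) t -> x <= k - 3 /\ x <> k - 4 /\ x <> k - 5 /\ 0 < x.
  move=> x; rewrite M1 => /andP [/eqP n1 xt].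
  have := R x xt; have := LP_nb H k1 xt.
  have : x <> k by move=> e; move: xt; rewrite e kt.
  lia.
case: (boolP ((k - 3) \in rem (k-1) t)) => k3; last first.
  have R1 : inr (k - 6) (rem (k-1) t).
    move=> x xt; have := R1' x xt.
    have : x <> k - 3 by move=> e; move: k3; rewrite -e xt.
    lia.
  have := bound H1 R1; have -> : (k - 6).+3 = k - 3 by lia.
  lia.
case: (rem_split H1 k3) => H2 S2 M2.
have R2 : inr (k - 8) (rem (k-3) (rem (k-1) t)).
  move=> x; rewrite M2 => /andP [/eqP n2 xt].
  have := R1' x xt; have := LP_nb H1 k3 xt.
  lia.
have := IH (k - 8) ltac:(lia) _ H2 R2.
have -> : (k - 8).+1 = k - 7 by lia.
lia.
Qed.

Lemma base_rep k :
  all (fun m => has (fun u => FQ_legal u && (S u == m)) (subseqs (iota 1 k)))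
      (iota 0 (f k.+1)) ->
  forall m, m < f k.+1 -> exists t, [/\ LP t, inr k t & S t = m].
Proof.
move=> /allP A m Hm; have /hasP [u us /andP [L /eqP E]] := A m ltac:(rewrite mem_iota; lia).
by case: (of_sub us L) => H R; exists u.
Qed.

Lemma rep k m : m < f k.+1 -> exists t, [/\ LP t, inr k t & S t = m].
Proof.
elim/ltn_ind: k m => k IH m Hm.
case: (ltnP k 7) => Hk.
  case: k Hk {IH} m Hm => [|[|[|[|[|[|[|k]]]]]]] // _;
  apply: base_rep; vm_compute; reflexivity.
case: (ltnP m (f k)) => Hmk.
  have ek : k = k.-1.+1 by lia.
  rewrite ek in Hmk.
  case: (IH k.-1 ltac:(lia) m Hmk) => t [H R E]; exists t; split => //.
  by move=> x /R; lia.
have E1 := @fi' k (k-4) ltac:(lia) ltac:(lia).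
have Hr : m - f k < f (k - 5).+1.
  have -> : (k - 5).+1 = k - 4 by lia.
  lia.
case: (IH (k - 5) ltac:(lia) _ Hr) => t [H R E].
have kt : k \notin t by apply/negP => /R; lia.
exists (k :: t); split.
- case: H => U A N; split.
  + by rewrite /= kt.
  + move=> x y; rewrite !inE => /orP [/eqP -> | xt] /orP [/eqP -> | yt].
    * rewrite /bad /natdist; lia.
    * have := R y yt; rewrite /bad /natdist; lia.
    * have := R x xt; rewrite /bad /natdist; lia.
    * exact: A.
  + rewrite !inE; case=> /orP [/eqP e | a] /orP [/eqP e' | b]; try lia.
    by apply: N.
- by move=> x; rewrite inE => /orP [/eqP -> | /R]; lia.
- rewrite /S /= -/(S t) E; lia.
Qed.

Lemma head_filter (P : pred nat) a b n : b <= a < b + n ->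
  (forall m, b <= m < a -> P m) -> ~~ P a ->
  head 0 [seq m <- iota b n | ~~ P m] = a.
Proof.
elim: n b => [|n IH] b H1 H2 H3; first lia.
rewrite /= ; case: (eqVneq b a) => [-> | ne]; first by rewrite H3.
rewrite H2 /=; last lia.
apply: IH => //; first lia.
move=> m Hm; apply: H2; lia.
Qed.

Definition fs k := mkseq (fun i => f i.+1) k.

Lemma repr_eq k m : FQ_repr (fs k) m =
  has (fun L => FQ_legal L && (S L == m)) (subseqs (iota 1 k)).
Proof.
rewrite /FQ_repr /fs size_mkseq; apply: eq_in_has => L /mem_subseqs /mem_subseq sub.
rewrite /S; congr (_ && (_ == _)); congr sumn; apply/eq_in_map => l /sub.
rewrite mem_iota => Hl; rewrite nth_mkseq; last lia.
by congr f; lia.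
Qed.

Lemma sum_bound k : f k.+1 <= sumn (fs k) + 1.
Proof.
elim: k => [|k IH] //; rewrite /fs mkseqS sumn_rcons -/(fs k).
have := f_dbl k; lia.
Qed.

Lemma next_eq k : FQ_next (fs k) = f k.+1.
Proof.
rewrite /FQ_next; apply: head_filter.
- have := sum_bound k; have := f_pos k.+1 (ltn0Sn k); lia.
- move=> m Hm; rewrite repr_eq.
  case: (@rep k m ltac:(lia)) => t [H R E].
  case: (to_sub H R) => u us [L Su]; apply/hasP; exists u => //.
  by rewrite L Su E eqxx.
- rewrite repr_eq; apply/hasP => [[u us /andP [L /eqP E]]].
  case: (of_sub us L) => H R; exact: nonrep H R E.
Qed.

Lemma terms_eq k : FQ_terms k = fs k.
Proof. by elim: k => [|k IH] //=; rewrite IH next_eq /fs mkseqS. Qed.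

Lemma qf n : q n = f n.
Proof.
rewrite /q terms_eq; case: n => [|n] //=; rewrite /fs nth_mkseq //.
Qed.

Theorem mainTheorem8 :
  (forall n : nat, 6 <= n -> q n.+1 = q n + q (n - 4)) /\
  (forall n : nat, 5 <= n -> q n.+1 = q n.-1 + q n.-2) /\
  (forall n : nat, 1 <= n -> \sum_(1 <= i < n.+1) q i = q (n + 5) - 6).
Proof.
split; [|split].
- by move=> n Hn; rewrite !qf fi.
- move=> n Hn; rewrite !qf fii; last lia.
  have -> : n.+1 - 2 = n.-1 by lia.
  by have -> : n.+1 - 3 = n.-2 by lia.
- case=> // n _; elim: n => [|n IH]; first by rewrite big_nat1 !qf.
  rewrite big_nat_recr //= IH !qf.
  have := @fi' (n.+1 + 5) n.+2 ltac:(lia) ltac:(lia).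
  have -> : (n.+1 + 5).+1 = n.+2 + 5 by lia.
  have := f_leq 6 (n.+1 + 5) ltac:(lia). rewrite [f 6]/=. lia.
Qed.
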